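(* If a system $C=(1,c_2,c_3,c_4,c_5,2c_5-c_2)$ is canonical and its subsystem $(1,c_2,c_3,c_4,c_5)$ is noncanonical, then $C=(1,2,3,c_4,c_4+1,2c_4)$ and $c_4>4$.
   Context: A system is a tuple $C=(c_1,\dots,c_n)$ of integers with $1=c_1<c_2<\dots<c_n$; for $k\le n$, $(c_1,\dots,c_k)$ is a subsystem. For a positive integer $v$, $\mathrm{opt}_C(v)$ is the minimum of $\sum_i x_i$ over $x\in\mathbb{Z}_{\ge0}^n$ with $\sum_i c_ix_i=v$. The greedy representation of $v$ is produced by: for $i=n$ down to $1$, while $c_i\le$ remaining value, take a coin $c_i$. $\mathrm{grd}_C(v)$ is its number of coins. A positive integer $w$ is a counterexample if $\mathrm{opt}_C(w)<\mathrm{grd}_C(w)$; $C$ is canonical if it has none, noncanonical otherwise. *)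

(* Defs.v *)
From mathcomp Require Import all_boot.
Set Implicit Arguments. Unset Strict Implicit. Unset Printing Implicit Defensive.

Definition is_system (C : seq nat) : Prop :=
  head 0 C = 1 /\ sorted ltn C.

Definition value (C x : seq nat) : nat := \sum_(i < size C) nth 0 C i * nth 0 x i.

Definition is_repr (C x : seq nat) (v : nat) : Prop :=
  size x = size C /\ value C x = v.

(* Greedy: process coins from largest to smallest; for coin c, take as many
   coins c as fit (the "while c <= remaining" loop takes exactly rem %/ c
   coins and leaves rem %% c). *)
Fixpoint grd_aux (desc : seq nat) (v : nat) : nat :=
  match desc with
  | [::] => 0
  | c :: t => v %/ c + grd_aux t (v %% c)
  end.

Definition grd (C : seq nat) (v : nat) : nat := grd_aux (rev C) v.

Definition counterexample (C : seq nat) (w : nat) : Prop :=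
  0 < w /\ exists x, is_repr C x w /\ sumn x < grd C w.

Definition canonical (C : seq nat) : Prop := forall w, ~ counterexample C w.
Definition noncanonical (C : seq nat) : Prop := exists w, counterexample C w.

(* Main.v *)
Require Import Defs.
From mathcomp Require Import all_boot zify.
From Stdlib Require Import Classical.

Lemma grd_small m t v : v < m -> grd_aux (m::t) v = grd_aux t v.
Proof. move=> h /=. by rewrite divn_small // modn_small. Qed.

Lemma grd_step m t v : 0 < m -> m <= v -> grd_aux (m::t) v = (grd_aux (m::t) (v - m)).+1.
Proof.
move=> m0 mv /=. rewrite -{1 2}(subnK mv) modnDr.
have -> : (v - m) + m = (v - m) + 1 * m by rewrite mul1n.
by rewrite divnDMl // addn1 addSn.
Qed.

Lemma grd1 v : grd_aux [:: 1] v = v.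
Proof. by rewrite /= divn1 addn0. Qed.

Lemma grd_a1 a u : 0 < a -> grd_aux [:: a; 1] u <= 1 -> 0 < u -> u = 1 \/ u = a.
Proof.
move=> a0 h u0. case: (ltnP u a) => ua.
  by move: h; rewrite grd_small // grd1; lia.
move: h; rewrite grd_step //; case: (ltnP (u - a) a) => ua2.
  rewrite grd_small // grd1; lia.
rewrite grd_step //; lia.
Qed.

Lemma grd_pos3 b a u : 0 < a -> a < b -> 0 < u -> 0 < grd_aux [:: b; a; 1] u.
Proof.
move=> a0 ab u0. case: (ltnP u b) => ub; last by rewrite grd_step //; lia.
rewrite grd_small //. case: (ltnP u a) => ua; last by rewrite grd_step.
by rewrite grd_small // grd1.
Qed.

Lemma min_ex (P : nat -> Prop) n : P n -> exists m, P m /\ forall k, k < m -> ~ P k.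
Proof.
elim/ltn_ind: n => n IH Pn.
case: (classic (exists k, k < n /\ P k)) => [[k [kn Pk]]|H].
- exact: IH k kn Pk.
- exists n; split=> // k kn Pk; apply: H; by exists k.
Qed.

Lemma reprD a b c d x v : is_repr [:: 1; a; b; c; d] x v ->
  exists x1 x2 x3 x4 x5, x = [:: x1; x2; x3; x4; x5] /\ x1 + a*x2 + b*x3 + c*x4 + d*x5 = v.
Proof.
case=> hs; case: x hs => [|x1 [|x2 [|x3 [|x4 [|x5 [|x6 x]]]]]] //= _.
rewrite /value !big_ord_recl big_ord0 /= => <-.
exists x1, x2, x3, x4, x5; split=> //; lia.
Qed.

Lemma reprD' a b c d x1 x2 x3 x4 x5 v : x1 + a*x2 + b*x3 + c*x4 + d*x5 = v ->
  is_repr [:: 1; a; b; c; d] [:: x1; x2; x3; x4; x5] v.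
Proof. move=> h; split=> //; rewrite /value !big_ord_recl big_ord0 /=; lia. Qed.

Lemma reprC' a b c d e x1 x2 x3 x4 x5 x6 v : x1 + a*x2 + b*x3 + c*x4 + d*x5 + e*x6 = v ->
  is_repr [:: 1; a; b; c; d; e] [:: x1; x2; x3; x4; x5; x6] v.
Proof. move=> h; split=> //; rewrite /value !big_ord_recl big_ord0 /=; lia. Qed.

Lemma greedy_rep a b c d v : 0 < a -> 0 < b -> 0 < c -> 0 < d ->
  exists z1 z2 z3 z4 z5, z1 + a*z2 + b*z3 + c*z4 + d*z5 = v /\
     z1 + z2 + z3 + z4 + z5 = grd [:: 1; a; b; c; d] v.
Proof.
move=> a0 b0 c0 d0. rewrite /grd /= divn1 addn0.
set r1 := v %% d; set r2 := r1 %% c; set r3 := r2 %% b; set r4 := r3 %% a.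
exists r4, (r3 %/ a), (r2 %/ b), (r1 %/ c), (v %/ d); split; last by lia.
have e1 := divn_eq v d; have e2 := divn_eq r1 c; have e3 := divn_eq r2 b.
have e4 := divn_eq r3 a. rewrite -/r1 in e1; rewrite -/r2 in e2; rewrite -/r3 in e3.
rewrite -/r4 in e4. lia.
Qed.
Lemma divmod1 m v : 0 < m -> m <= v -> v < 2 * m -> v %/ m = 1 /\ v %% m = v - m.
Proof.
move=> m0 mv v2. have hs : v - m < m by lia.
rewrite -(subnK mv) modnDr.
have -> : (v - m) + m = (v - m) + 1 * m by rewrite mul1n.
by rewrite divnDMl // divn_small // modn_small //; split => //; lia.
Qed.

Theorem lemma7 (c2 c3 c4 c5 : nat) :
  is_system [:: 1; c2; c3; c4; c5; 2 * c5 - c2] ->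
  canonical [:: 1; c2; c3; c4; c5; 2 * c5 - c2] ->
  noncanonical [:: 1; c2; c3; c4; c5] ->
  [/\ c2 = 2, c3 = 3, c5 = c4 + 1 & 4 < c4].
Proof.
rename c2 into a; rename c3 into b; rename c4 into c; rename c5 into d.
move=> [_ hs] hcan [w0 hw0].
move: hs => /= /andP [h1a /andP [hab /andP [hbc /andP [hcd /andP [hde _]]]]].
set e := 2 * d - a.
have canC : forall x1 x2 x3 x4 x5 x6 v, 0 < v ->
    x1 + a*x2 + b*x3 + c*x4 + d*x5 + e*x6 = v ->
    grd [:: 1; a; b; c; d; e] v <= x1 + x2 + x3 + x4 + x5 + x6.
  move=> x1 x2 x3 x4 x5 x6 v v0 hv; rewrite leqNgt; apply/negP => hlt.
  apply: (hcan v); split=> //; exists [:: x1; x2; x3; x4; x5; x6]; split.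
    exact: reprC'.
  by rewrite [sumn _]/= -/e; lia.
set G := grd_aux [:: d; c; b; a; 1].
have gC : forall v, grd [:: 1; a; b; c; d; e] v = v %/ e + G (v %% e) by [].
have gD : forall v, grd [:: 1; a; b; c; d] v = G v by [].
have gCsmall : forall v, v < e -> grd [:: 1; a; b; c; d; e] v = G v.
  by move=> v hv; rewrite gC divn_small // modn_small.
have Gstep : forall v, d <= v -> G v = (G (v - d)).+1.
  by move=> v hv; rewrite /G grd_step //; lia.
have Glta : forall v, v < a -> G v = v.
  move=> v hv; rewrite /G grd_small; last lia.
  rewrite grd_small; last lia. rewrite grd_small; last lia.
  by rewrite grd_small // grd1.
have Gltb : forall v, v < b -> G v = grd_aux [:: a; 1] v.
  move=> v hv; rewrite /G grd_small; last lia.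
  rewrite grd_small; last lia. by rewrite grd_small.
have Gltc : forall v, v < c -> G v = grd_aux [:: b; a; 1] v.
  move=> v hv; rewrite /G grd_small; last lia. by rewrite grd_small.
pose R v s := exists y1 y2 y3 y4 y5, y1 + a*y2 + b*y3 + c*y4 + d*y5 = v /\
     y1 + y2 + y3 + y4 + y5 = s.
have addR : forall v s ci v', R v s -> (ci = 1 \/ ci = a \/ ci = b \/ ci = c \/ ci = d) ->
   v' = v + ci -> R v' s.+1.
  move=> v s ci v' [y1 [y2 [y3 [y4 [y5 [hv hs]]]]]] [|[|[|[|]]]] -> ->.
  - by exists y1.+1, y2, y3, y4, y5; split; lia.
  - by exists y1, y2.+1, y3, y4, y5; split; lia.
  - by exists y1, y2, y3.+1, y4, y5; split; lia.
  - by exists y1, y2, y3, y4.+1, y5; split; lia.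
  - by exists y1, y2, y3, y4, y5.+1; split; lia.
have grdR : forall v, R v (G v).
  move=> v; have [z1 [z2 [z3 [z4 [z5 [h1 h2]]]]]] := @greedy_rep a b c d v ltac:(lia) ltac:(lia) ltac:(lia) ltac:(lia).
  by exists z1, z2, z3, z4, z5; split.
have [w [[w0pos [x [hrep hlt]]] hmin0]] := @min_ex (counterexample [:: 1; a; b; c; d]) _ hw0.
have hmin : forall k s, k < w -> R k s -> G k <= s.
  move=> k s kw [y1 [y2 [y3 [y4 [y5 [hv hs]]]]]].
  case: (posnP k) => [->|k0]; first by rewrite /G /= !(div0n, mod0n).
  rewrite leqNgt; apply/negP => hl; apply: (hmin0 k kw); split=> //.
  exists [:: y1; y2; y3; y4; y5]; split; first exact: reprD'.
  by rewrite gD /=; lia.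
have [x1 [x2 [x3 [x4 [x5 [hx hval]]]]]] := reprD _ _ _ _ _ _ hrep.
rewrite hx gD /= in hlt.
set s := x1 + (x2 + (x3 + (x4 + (x5 + 0)))) in hlt.
have s0 : 0 < s.
  case: (posnP s) => // hs0. rewrite /s in hs0. nia.
have we : e <= w.
  rewrite leqNgt; apply/negP => we.
  have := canC x1 x2 x3 x4 x5 0 w w0pos ltac:(lia).
  rewrite gCsmall //; lia.
have wcd : w < c + d.
  rewrite ltnNge; apply/negP => wcd.
  have Gw := Gstep w ltac:(lia).
  have core : forall ci, 0 < ci -> ci <= d ->
      (ci = 1 \/ ci = a \/ ci = b \/ ci = c \/ ci = d) -> R (w - ci) s.-1 -> False.
    move=> ci ci0 cid hci hR.
    have h1 := hmin (w - ci) s.-1 ltac:(lia) hR.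
    case: (ltnP ci d) => cd.
      have h2 := Gstep (w - ci) ltac:(lia).
      have h3 : R (w - d) (G (w - ci - d)).+1.
        by apply: (addR _ _ ci _ (grdR (w - ci - d)) hci); lia.
      have h4 := hmin (w - d) _ ltac:(lia) h3.
      lia.
    have cdq : ci = d by lia. subst ci.
    lia.
  move: hval hlt s0 core; rewrite /s; clear s hx hrep.
  case: x5 => [|x5]; last first.
    move=> hval hlt s0 core.
    apply: (core d) => //; first by lia. by right; right; right; right.
    by exists x1, x2, x3, x4, x5; split; lia.
  case: x4 => [|x4]; last first.
    move=> hval hlt s0 core.
    apply: (core c) => //; first by lia. lia. by right; right; right; left.
    by exists x1, x2, x3, x4, 0; split; lia.
  case: x3 => [|x3]; last first.
    move=> hval hlt s0 core.
    apply: (core b) => //; first by lia. lia. by right; right; left.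
    by exists x1, x2, x3, 0, 0; split; lia.
  case: x2 => [|x2]; last first.
    move=> hval hlt s0 core.
    apply: (core a) => //; first by lia. lia. by right; left.
    by exists x1, x2, 0, 0, 0; split; lia.
  case: x1 => [|x1]; last first.
    move=> hval hlt s0 core.
    apply: (core 1) => //; first by lia. by left.
    by exists x1, 0, 0, 0, 0; split; lia.
  move=> /= hval; lia.
have hd : d = c + a - 1.
  have := canC 0 0 0 1 1 0 (c + d) ltac:(lia) ltac:(lia).
  rewrite gC; have [-> ->] := divmod1 e (c + d) ltac:(lia) ltac:(lia) ltac:(lia).
  rewrite Glta; lia.
have hwe : w = e by lia.
have hb : b = 2 * a - 1.
  have := canC 0 0 1 1 0 0 (b + c) ltac:(lia) ltac:(lia).
  rewrite gCsmall; last lia.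
  rewrite Gstep; last lia. rewrite Gltb; last lia.
  move=> h. have := grd_a1 a (b + c - d) ltac:(lia) ltac:(lia) ltac:(lia). lia.
case: (ltnP a 3) => ha.
  have a2 : a = 2 by lia.
  have b3 : b = 3 by lia.
  case: (ltnP 4 c) => hc; first by split=> //; lia.
  have c4 : c = 4 by lia.
  subst a b c. have d5 : d = 5 by lia. subst d.
  move: hlt; rewrite /G hwe /e /=. lia.
have hc : c = 3 * a - 2.
  have := canC 0 0 0 2 0 0 (2 * c) ltac:(lia) ltac:(lia).
  rewrite gCsmall; last lia.
  rewrite Gstep; last lia. rewrite Gltc; last lia.
  case: (ltnP (2 * c - d) b) => hu.
    rewrite grd_small // => h.
    have := grd_a1 a (2 * c - d) ltac:(lia) ltac:(lia) ltac:(lia). lia.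
  rewrite grd_step; [|lia|lia].
  have := grd_pos3 b a (2 * c - d - b) ltac:(lia) ltac:(lia).
  case: (posnP (2 * c - d - b)) => h0; first lia.
  move=> /(_ is_true_true) hp h. lia.
have Gw : G w = a.
  rewrite Gstep; last lia. rewrite Gltc; last lia.
  rewrite grd_step; [|lia|lia].
  rewrite grd_small; last lia. rewrite grd_small; last lia. rewrite grd1. lia.
rewrite Gw in hlt.
have [t ht] : exists t, a = t.+1 by exists a.-1; lia.
have hb' : b = 2 * t + 1 by lia.
have hc' : c = 3 * t + 1 by lia.
have hd' : d = 4 * t + 1 by lia.
have hw' : w = 7 * t + 1 by lia.
rewrite hb' hc' hd' hw' ht in hval. rewrite ht in hlt. rewrite /s in hlt.
set K := x2 + 2 * x3 + 3 * x4 + 4 * x5.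
have eq : x1 + x2 + x3 + x4 + x5 + t * K = 7 * t + 1 by rewrite /K; lia.
have hK : K <= 4 * (x1 + x2 + x3 + x4 + x5) by rewrite /K; lia.
have t2 : 2 <= t by lia.
case: (ltnP K 7) => hK7.
  have : t * K <= t * 6 by rewrite leq_mul2l; lia.
  lia.
case: (ltnP 7 K) => hK8.
  have : t * 8 <= t * K by rewrite leq_mul2l; lia.
  lia.
have K7 : K = 7 by lia.
rewrite K7 in eq. lia.
Qed.
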